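(* Let $\omega\in\mathbb{F}_8$ be a root of $y^3+y+1$, let $m\in\mathbb{N}$ and let $L,M,N$ be nonempty subsets of $[m]$ such that at least two of the sets $L\setminus(M\cup N)$, $M\setminus(N\cup L)$, $N\setminus(L\cup M)$ are nonempty. Let $D=\Delta_L+\omega\Delta_M+\omega^2\Delta_N\subseteq\mathbb{F}_8^m$ and $D^*=D\setminus\{0\}$. Then $C_{D^*}$ is a $3$-weight linear code over $\mathbb{F}_8$ of length $2^{|L|+|M|+|N|}-1$, dimension $|L\cup M\cup N|$ and minimum distance $2^{|L|+|M|+|N|-1}$; its codewords have weights $0$, $2^{|L|+|M|+|N|-1}$, $6\cdot 2^{|L|+|M|+|N|-3}$ and $7\cdot 2^{|L|+|M|+|N|-3}$. Moreover, if $A_i$ denotes the number of codewords of $C_{D^*}$ of weight $i$ and $Z_i=|\{v\in\mathbb{F}_8^m: wt(c_{D^*}(v))=i\}|$ for $0\le i\le|D^*|$, then $Z_0=2^{3(m-|L\cup M\cup N|)}$ and $Z_i=Z_0A_i$.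
   Context: $[m]=\{1,\dots,m\}$. For $w\in\mathbb{F}_2^m$, $\mathrm{Supp}(w)=\{i: w_i\neq0\}$; for $L\subseteq[m]$, $\Delta_L=\{w\in\mathbb{F}_2^m:\mathrm{Supp}(w)\subseteq L\}$. For $A,B,C\subseteq\mathbb{F}_2^m$, $A+\omega B+\omega^2C=\{a+\omega b+\omega^2c: a\in A,b\in B,c\in C\}$. For an ordered finite set $P\subseteq\mathbb{F}_8^m$, $c_P(v)=(v\cdot d)_{d\in P}$ with $v\cdot d=\sum_iv_id_i$, and $C_P=\{c_P(v): v\in\mathbb{F}_8^m\}$. An $l$-weight code is one whose nonzero codewords take exactly $l$ distinct Hamming weights. *)

(* Defs.v *)
From HB Require Import structures.
From mathcomp Require Import all_boot all_order all_algebra all_field.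
Set Implicit Arguments. Unset Strict Implicit. Unset Printing Implicit Defensive.
Import GRing.Theory.
Local Open Scope ring_scope.

Section Codes.
Variables (F : finFieldType) (m : nat).
Local Notation V := 'rV[F]_m.

Definition dot (v d : V) : F := \sum_(i < m) v 0 i * d 0 i.

Definition Delta (L : {set 'I_m}) : {set V} :=
  [set w : V | [forall i, ((w 0 i == 0) || (w 0 i == 1)) &&
                          ((w 0 i != 0) ==> (i \in L))]].

Definition Dset (om : F) (A B C : {set V}) : {set V} :=
  [set x : V | [exists a in A, exists b in B, exists c in C,
                 x == a + om *: b + om ^+ 2 *: c]].

Definition cP (P : {set V}) (v : V) : 'rV[F]_#|P| :=
  \row_(i < #|P|) dot v (enum_val i).

Definition CP (P : {set V}) : {set 'rV[F]_#|P|} := [set cP P v | v : V].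

Definition CPvs (P : {set V}) : {vspace 'rV[F]_#|P|} :=
  (<< [seq cP P v | v : V] >>)%VS.
End Codes.

Definition wt (F : finFieldType) n (c : 'rV[F]_n) : nat :=
  #|[set i : 'I_n | c 0 i != 0]|.

Definition weights (F : finFieldType) n (C : {set 'rV[F]_n}) : seq nat :=
  undup [seq wt c | c <- enum C & c != 0].

Definition l_weight (F : finFieldType) n (C : {set 'rV[F]_n}) (l : nat) : Prop :=
  size (weights C) = l.

(* minimum distance = minimum weight of a nonzero codeword (linear code);
   n (the length) is a neutral upper bound *)
Definition min_dist (F : finFieldType) n (C : {set 'rV[F]_n}) : nat :=
  \big[minn/n]_(c in C | c != 0) wt c.

Definition Acount (F : finFieldType) n (C : {set 'rV[F]_n}) (i : nat) : nat :=
  #|[set c in C | wt c == i]|.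

Definition Zcount (F : finFieldType) m (P : {set 'rV[F]_m}) (i : nat) : nat :=
  #|[set v : 'rV[F]_m | wt (cP P v) == i]|.

(* Main.v *)
Require Import Defs.
From HB Require Import structures.
From mathcomp Require Import all_boot all_order all_algebra all_field.
From mathcomp Require Import ring zify.
Import GRing.Theory.
Local Open Scope ring_scope.

Lemma fiber_size (aT rT : finZmodType) (G : {set aT}) (f : aT -> rT) x0 :
  (forall x y, x \in G -> y \in G -> x - y \in G) ->
  (forall x y, f (x - y) = f x - f y) -> x0 \in G ->
  #|[set x in G | f x == f x0]| = #|[set x in G | f x == 0%R]|.
Proof.
move=> GB fB Gx0.
have f0 : f 0 = 0 by rewrite -(subrr 0) fB subrr.
rewrite -(card_imset _ (addIr (- x0))).
apply: eq_card => z; rewrite !inE; apply/imsetP/andP.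
  move=> [x1]; rewrite inE => /andP [Gx1 /eqP fx1] ->.
  by rewrite GB // fB fx1 subrr.
move=> [Gz /eqP fz]; exists (z + x0); last by rewrite addrK.
have Gn : - x0 \in G by rewrite -sub0r GB // -(subrr x0) GB.
have -> : z + x0 = z - (- x0) by rewrite opprK.
by rewrite inE GB //= fB fz sub0r -(sub0r x0) fB f0 sub0r opprK.
Qed.

Lemma fiber_card (aT rT : finZmodType) (G : {set aT}) (f : aT -> rT) :
  (forall x y, x \in G -> y \in G -> x - y \in G) ->
  (forall x y, f (x - y) = f x - f y) ->
  #|G| = (#|f @: G| * #|[set x in G | f x == 0%R]|)%N.
Proof.
move=> GB fB.
rewrite -sum1_card (partition_big_imset f) /= -sum_nat_const.
apply: eq_bigr => y /imsetP [x0 Gx0 ->].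
by rewrite sum1dep_card -(@fiber_size _ _ _ _ _ GB fB Gx0); apply: eq_card => z; rewrite !inE.
Qed.

Lemma wt_eq0 (F : finFieldType) n (c : 'rV[F]_n) : (wt c == 0%N) = (c == 0).
Proof.
rewrite /wt cards_eq0; apply/eqP/eqP => [h | ->].
  apply/rowP => i; rewrite [RHS]mxE; apply/eqP; apply: contraT => nz.
  have : i \in [set i0 | c 0 i0 != 0] by rewrite inE.
  by rewrite h inE.
by apply/setP => i; rewrite !inE mxE eqxx.
Qed.

Lemma bigmin_le_seq (I : eqType) (r : seq I) (P : pred I) (F : I -> nat) idx i0 :
  i0 \in r -> P i0 -> (\big[minn/idx]_(i <- r | P i) F i <= F i0)%N.
Proof.
elim: r => [|x r IH] //; rewrite inE big_cons => /orP [/eqP -> Px | ir Pi0].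
  by rewrite Px geq_minl.
case: (P x); last exact: IH.
exact: leq_trans (geq_minr _ _) (IH ir Pi0).
Qed.

Lemma bigmin_le (I : finType) (P : pred I) (F : I -> nat) idx i0 :
  P i0 -> (\big[minn/idx]_(i | P i) F i <= F i0)%N.
Proof. by apply: bigmin_le_seq; rewrite mem_index_enum. Qed.

Section Main.
Variables (F : finFieldType) (HF : #|F| = 8%N) (om : F)
  (Hom : om ^+ 3 + om + 1 = 0).

Lemma char2 : (2%:R : F) = 0.
Proof.
have := @card_finPcharP F 2 3 HF isT.
by move/pcharf0.
Qed.

Lemma addxx (x : F) : x + x = 0.
Proof. by rewrite -mulr2n -mulr_natr char2 mulr0. Qed.

Lemma opp_id (x : F) : - x = x.
Proof. by apply/eqP; rewrite eq_sym -subr_eq0 opprK addxx. Qed.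

Lemma omn0 : om != 0.
Proof. apply/eqP => h; move: Hom; rewrite h expr0n /= !add0r => /eqP; by rewrite oner_eq0. Qed.

Lemma omn1 : om != 1.
Proof. apply/eqP => h; move: Hom; rewrite h expr1n addxx add0r => /eqP; by rewrite oner_eq0. Qed.

Lemma one_om : 1 + om != 0.
Proof. by rewrite addr_eq0 opp_id eq_sym omn1. Qed.

Lemma one_om2 : 1 + om ^+ 2 != 0.
Proof.
have -> : 1 + om ^+ 2 = (1 + om) ^+ 2.
  by rewrite sqrrD expr1n mul1r -mulr_natr char2 mulr0 addr0.
by rewrite expf_eq0 (negbTE one_om) andbF.
Qed.

Lemma om_om2 : om + om ^+ 2 != 0.
Proof.
have -> : om + om ^+ 2 = om * (1 + om) by rewrite mulrDr mulr1 expr2.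
by rewrite mulf_eq0 negb_or omn0 one_om.
Qed.

Lemma one_om_om2 : 1 + om + om ^+ 2 != 0.
Proof.
apply/eqP => h; move/eqP: one_om2; apply.
have -> : 1 + om ^+ 2 = - (1 - om ^+ 2) by rewrite opp_id opp_id.
have -> : 1 - om ^+ 2 = (om ^+ 3 + om + 1) - om * (1 + om + om ^+ 2) by ring.
by rewrite Hom h mulr0 subr0 oppr0.
Qed.

Definition rb (x y z : bool) : F := x%:R + om * y%:R + om ^+ 2 * z%:R.

Lemma natb_add (x y : bool) : ((x (+) y)%:R : F) = x%:R + y%:R.
Proof. by case: x; case: y; rewrite /= ?addr0 ?add0r // -natrD char2. Qed.

Lemma rb_add x y z x' y' z' :
  rb x y z + rb x' y' z' = rb (x (+) x') (y (+) y') (z (+) z').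
Proof. rewrite /rb !natb_add; ring. Qed.

Lemma rb0 x y z : rb x y z = 0 -> [/\ x = false, y = false & z = false].
Proof.
case: x; case: y; case: z; rewrite /rb /= ?mulr0 ?mulr1 ?mulr0n ?mulr1n
  ?addr0 ?add0r // => /eqP; rewrite ?oner_eq0 ?(negbTE omn0) ?(negbTE one_om)
  ?(negbTE one_om2) ?(negbTE om_om2) ?(negbTE one_om_om2) ?expf_eq0 ?(negbTE omn0) ?andbF //.
Qed.

Lemma rb_inj x y z x' y' z' : rb x y z = rb x' y' z' ->
  [/\ x = x', y = y' & z = z'].
Proof.
move=> h; have : rb x y z + rb x' y' z' = 0 by rewrite h addxx.
rewrite rb_add => /rb0 []; clear h.
by case: x; case: x'; case: y; case: y'; case: z; case: z'.
Qed.


Variables (m : nat) (L M N : {set 'I_m}).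
Local Notation V := 'rV[F]_m.

Definition ind (A : {set 'I_m}) : V := \row_k ((k \in A)%:R : F).
Definition dv A B C : V := ind A + om *: ind B + om ^+ 2 *: ind C.

Lemma dvE A B C k : dv A B C 0 k = rb (k \in A) (k \in B) (k \in C).
Proof. by rewrite !mxE. Qed.

Lemma dv_inj A B C A' B' C' : dv A B C = dv A' B' C' ->
  [/\ A = A', B = B' & C = C'].
Proof.
move=> h.
have H k : [/\ (k \in A) = (k \in A'), (k \in B) = (k \in B') & (k \in C) = (k \in C')].
  by apply: rb_inj; rewrite -!dvE h.
by split; apply/setP => k; have [] := H k.
Qed.

Lemma Delta_ind (X : {set 'I_m}) (a : V) : reflect (exists2 A : {set 'I_m}, A \subset X & a = ind A) (a \in Delta F X).
Proof.
apply: (iffP idP).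
  rewrite inE => /forallP h; exists [set k | a 0 k == 1].
    apply/subsetP => k; rewrite inE => /eqP ak.
    by have /andP [_ /implyP] := h k; apply; rewrite ak oner_neq0.
  apply/rowP => k; rewrite !mxE inE.
  by have /andP [/orP [] /eqP -> _] := h k; rewrite ?eqxx // eq_sym oner_eq0.
move=> [A /subsetP sA ->]; rewrite inE; apply/forallP => k; rewrite !mxE.
by case kA: (k \in A); rewrite /= ?eqxx ?orbT //= oner_neq0 /= sA.
Qed.

Definition D := Dset om (Delta F L) (Delta F M) (Delta F N).

Lemma D_char (x : V) : reflect (exists A B C : {set 'I_m}, [/\ A \subset L, B \subset M, C \subset N & x = dv A B C]) (x \in D).
Proof.
apply: (iffP idP).
  rewrite inE => /existsP [a /andP [/Delta_ind [A sA ->]]].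
  move=> /existsP [b /andP [/Delta_ind [B sB ->]]].
  move=> /existsP [c /andP [/Delta_ind [C sC ->]]] /eqP ->.
  by exists A, B, C.
move=> [A [B [C [sA sB sC ->]]]]; rewrite inE; apply/existsP; exists (ind A).
rewrite (introT (Delta_ind _ _)) //=; last by exists A.
apply/existsP; exists (ind B); rewrite (introT (Delta_ind _ _)) //=; last by exists B.
apply/existsP; exists (ind C); rewrite (introT (Delta_ind _ _)) //=; last by exists C.
Qed.

Definition dv3 (p : {set 'I_m} * {set 'I_m} * {set 'I_m}) := dv p.1.1 p.1.2 p.2.

Lemma D_imset : D = dv3 @: setX (setX (powerset L) (powerset M)) (powerset N).
Proof.
apply/setP => x; apply/D_char/imsetP.
  move=> [A [B [C [sA sB sC ->]]]]; exists (A, B, C) => //.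
  by rewrite !inE sA sB sC.
move=> [[[A B] C]]; rewrite !inE /= => /andP [/andP [sA sB] sC] ->.
by exists A, B, C.
Qed.

Lemma D_card : #|D| = (2 ^ (#|L| + #|M| + #|N|))%N.
Proof.
rewrite D_imset card_in_imset; last first.
  by move=> [[A B] C] [[A1 B1] C1] _ _ /dv_inj /= [-> -> ->].
by rewrite !cardsX !card_powerset !expnD.
Qed.


Lemma dotB (v x y : V) : dot v (x - y) = dot v x - dot v y.
Proof. by rewrite /dot -sumrB; apply: eq_bigr => k _; rewrite !mxE mulrBr. Qed.
Lemma dotD (v x y : V) : dot v (x + y) = dot v x + dot v y.
Proof. by rewrite /dot -big_split; apply: eq_bigr => k _; rewrite !mxE mulrDr. Qed.
Lemma dotZ (v x : V) a : dot v (a *: x) = a * dot v x.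
Proof. by rewrite /dot mulr_sumr; apply: eq_bigr => k _; rewrite !mxE mulrCA. Qed.
Lemma dotDl (u w x : V) : dot (u + w) x = dot u x + dot w x.
Proof. by rewrite /dot -big_split; apply: eq_bigr => k _; rewrite !mxE mulrDl. Qed.
Lemma dot0 (v : V) : dot v 0 = 0.
Proof. by rewrite /dot big1 // => k _; rewrite mxE mulr0. Qed.
Lemma dot_indr (v : V) A : dot v (ind A) = \sum_(k in A) v 0 k.
Proof.
rewrite /dot [RHS]big_mkcond; apply: eq_bigr => k _; rewrite mxE.
by case: (k \in A); rewrite ?mulr1 ?mulr0.
Qed.
Lemma dot_indl A (x : V) : dot (ind A) x = \sum_(k in A) x 0 k.
Proof.
rewrite /dot [RHS]big_mkcond; apply: eq_bigr => k _; rewrite mxE.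
by case: (k \in A); rewrite ?mul1r ?mul0r.
Qed.
Lemma dot_dv (v : V) A B C :
  dot v (dv A B C) = dot v (ind A) + om * dot v (ind B) + om ^+ 2 * dot v (ind C).
Proof. by rewrite /dv !dotD !dotZ. Qed.

Definition SD (A A' : {set 'I_m}) := [set k | (k \in A) (+) (k \in A')].

Lemma SD_sub (X A A' : {set 'I_m}) : A \subset X -> A' \subset X -> SD A A' \subset X.
Proof.
move=> /subsetP sA /subsetP sA'; apply/subsetP => k; rewrite inE.
case kA: (k \in A) => /= h; first exact: (sA k kA).
exact: (sA' k h).
Qed.

Lemma D_sub x y : x \in D -> y \in D -> x - y \in D.
Proof.
move=> /D_char [A [B [C [sA sB sC ->]]]] /D_char [A' [B' [C' [sA' sB' sC' ->]]]].
apply/D_char; exists (SD A A'), (SD B B'), (SD C C'); split; try exact: SD_sub.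
apply/rowP => k; rewrite !mxE opp_id.
by rewrite (rb_add (k \in A)) !inE.
Qed.

Definition Ds := D :\ 0.
Definition W (v : V) := (dot v) @: D.
Definition K (v : V) := [set d in D | dot v d == 0].

Lemma D_fiber v : #|D| = (#|W v| * #|K v|)%N.
Proof.
apply: fiber_card; first exact: D_sub.
exact: dotB.
Qed.

Lemma wt_cP (P : {set V}) v : wt (cP P v) = #|[set d in P | dot v d != 0]|.
Proof.
rewrite /wt; have -> : [set d in P | dot v d != 0] = enum_val @: [set i : 'I_#|P| | cP P v 0 i != 0].
  apply/setP => d; apply/idP/imsetP.
    rewrite inE => /andP [Pd nz]; exists (enum_rank_in Pd d).
      by rewrite inE /cP mxE enum_rankK_in.
    by rewrite enum_rankK_in.
  move=> [i]; rewrite inE => nz ->; rewrite enum_valP /=; move: nz; rewrite inE /cP !mxE; done.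
by rewrite card_imset //; exact: enum_val_inj.
Qed.

Lemma wt_D v : wt (cP Ds v) = (#|D| - #|K v|)%N.
Proof.
rewrite wt_cP.
have -> : [set d in Ds | dot v d != 0] = D :\: K v.
  apply/setP => d; rewrite [in LHS]in_set in_setD1 in_setD [d \in K v]in_set.
  by case: (d =P 0) => [-> | _]; rewrite ?dot0 ?eqxx /=; case: (_ \in D); rewrite /= ?andbT ?andbF.
have sK : K v \subset D by apply/subsetP => d; rewrite inE => /andP [].
by rewrite cardsD (setIidPr sK).
Qed.

Lemma pow_W v : exists2 j, (j <= 3)%N & #|W v| = (2 ^ j)%N.
Proof.
have : (#|W v| %| 2 ^ (#|L| + #|M| + #|N|))%N by rewrite -D_card (D_fiber v) dvdn_mulr.
case/(dvdn_pfactor _ _ (isT : prime 2)) => j _ Wj.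
exists j => //; rewrite -(@leq_exp2l 2) // -Wj (_ : (2 ^ 3 = 8)%N) // -HF.
exact: max_card.
Qed.


Local Notation s := (#|L| + #|M| + #|N|)%N.

Lemma wt_pow v j : (j <= 3)%N -> (3 <= s)%N -> #|W v| = (2 ^ j)%N ->
  wt (cP Ds v) = (2 ^ s - 2 ^ (s - j))%N.
Proof.
move=> hj hs Wj; rewrite wt_D D_card.
have hs' : (s = j + (s - j))%N by rewrite subnKC // (leq_trans hj hs).
have E : (2 ^ j * 2 ^ (s - j) = 2 ^ j * #|K v|)%N.
  by rewrite -expnD -hs' -D_card (D_fiber v) Wj.
suff -> : #|K v| = (2 ^ (s - j))%N by [].
by apply/eqP; rewrite -(eqn_pmul2l (expn_gt0 2 j)) E.
Qed.

Lemma wval (n j : nat) : (j <= 3)%N -> (3 <= n)%N ->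
  [\/ (j = 0 /\ 2 ^ n - 2 ^ (n - j) = 0),
      (j = 1 /\ 2 ^ n - 2 ^ (n - j) = 2 ^ n.-1),
      (j = 2 /\ 2 ^ n - 2 ^ (n - j) = 6 * 2 ^ (n - 3)) |
      (j = 3 /\ 2 ^ n - 2 ^ (n - j) = 7 * 2 ^ (n - 3))]%N.
Proof.
move=> hj hn; have [t ->] : exists t, n = t.+3 by exists (n - 3)%N; rewrite -addn3 subnK.
have h3 : (t.+3 - 3 = t)%N by rewrite -addn3 addnK.
case: j hj => [|[|[|[|]]]] // _; rewrite ?subn0 ?subSS ?subn0 ?h3 /= !expnS;
  [constructor 1 | constructor 2 | constructor 3 | constructor 4]; split => //; lia.
Qed.

Lemma W_ge v (sq : seq F) : uniq sq -> {subset sq <= W v} -> (size sq <= #|W v|)%N.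
Proof.
move=> uq sub; rewrite -(card_uniqP uq); apply: subset_leq_card.
by apply/subsetP.
Qed.

Lemma W_le v (sq : seq F) : {subset W v <= sq} -> (#|W v| <= size sq)%N.
Proof.
move=> sub; apply: leq_trans (card_size sq); apply: subset_leq_card.
by apply/subsetP.
Qed.

Lemma D0 : (0 : V) \in D.
Proof. by rewrite -(subrr (0 : V)) D_sub //; apply/D_char; exists set0, set0, set0; rewrite !sub0set; split => //; apply/rowP => k; rewrite !mxE !inE /rb /= !mulr0 !addr0. Qed.

Lemma W0 v : 0 \in W v.
Proof. by apply/imsetP; exists 0; rewrite ?D0 ?dot0. Qed.

Definition priv (i : 'I_m) (t : F) :=
  (forall x, x \in D -> x 0 i = 0 \/ x 0 i = t) /\
  exists2 d, d \in D & d 0 i = t /\ forall k, k != i -> d 0 k = 0.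

Lemma dot_e1 i (x : V) : dot (ind [set i]) x = x 0 i.
Proof. by rewrite dot_indl big_set1. Qed.

Lemma W2 i t : priv i t -> t != 0 -> #|W (ind [set i])| = 2%N.
Proof.
move=> [h1 [d Dd [di _]]] t0; apply/eqP; rewrite eqn_leq; apply/andP; split.
  have -> : 2%N = size [:: 0; t] by [].
  apply: W_le => y /imsetP [x Dx ->]; rewrite dot_e1 !inE.
  by case: (h1 x Dx) => ->; rewrite eqxx ?orbT.
have -> : 2%N = size [:: 0; t] by [].
apply: W_ge; first by rewrite /= inE eq_sym t0.
move=> y; rewrite !inE => /orP [] /eqP ->; first exact: W0.
by apply/imsetP; exists d; rewrite // dot_e1.
Qed.

Lemma W4 i j ti tj : priv i ti -> priv j tj -> ti != 0 -> tj != 0 -> ti != tj ->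
  #|W (ind [set i] + ind [set j])| = 4%N.
Proof.
move=> [hi [di Ddi [dii dik]]] [hj [dj Ddj [djj djk]]] ti0 tj0 titj.
have ij : i != j.
  apply/eqP => e; subst j; case: (hj di Ddi); rewrite dii => /eqP; by rewrite ?(negbTE ti0) ?(negbTE titj).
have ge3 : (3 <= #|W (ind [set i] + ind [set j])|)%N.
  have -> : 3%N = size [:: 0; ti; tj] by [].
  apply: W_ge; first by rewrite /= !inE negb_or eq_sym ti0 eq_sym tj0 titj.
  move=> y; rewrite !inE => /orP [/eqP -> | /orP [] /eqP ->]; first exact: W0.
    apply/imsetP; exists di => //; rewrite dotDl !dot_e1 dii dik 1?eq_sym // addr0 //.
  apply/imsetP; exists dj => //; rewrite dotDl !dot_e1 djj djk // add0r //.
have le4 : (#|W (ind [set i] + ind [set j])| <= 4)%N.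
  have -> : 4%N = size [:: 0; ti; tj; ti + tj] by [].
  apply: W_le => y /imsetP [x Dx ->]; rewrite dotDl !dot_e1 !inE.
  by case: (hi x Dx) => ->; case: (hj x Dx) => ->; rewrite ?addr0 ?add0r eqxx ?orbT.
have [k hk Wk] := pow_W (ind [set i] + ind [set j]).
move: ge3 le4; rewrite Wk; case: k hk {Wk} => [|[|[|[|]]]] //.
Qed.


Lemma rb000 : rb false false false = 0.
Proof. by rewrite /rb /= !mulr0 !addr0. Qed.
Lemma rb100 : rb true false false = 1.
Proof. by rewrite /rb /= !mulr0 !addr0. Qed.
Lemma rb010 : rb false true false = om.
Proof. by rewrite /rb /= !mulr0 mulr1 addr0 add0r. Qed.
Lemma rb001 : rb false false true = om ^+ 2.
Proof. by rewrite /rb /= !mulr0 mulr1 !add0r. Qed.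

Lemma neq_rb x y z x' y' z' : (x, y, z) != (x', y', z') -> rb x y z != rb x' y' z'.
Proof. by apply: contra => /eqP /rb_inj [-> -> ->]. Qed.

Definition rb3 (p : bool * bool * bool) := rb p.1.1 p.1.2 p.2.
Lemma rb3_inj : injective rb3.
Proof. by move=> [[x y] z] [[x' y'] z'] /rb_inj /= [-> -> ->]. Qed.

Lemma privL i : i \in L -> i \notin M -> i \notin N -> priv i 1.
Proof.
move=> iL iM iN; split.
  move=> x /D_char [A [B [C [sA sB sC ->]]]]; rewrite dvE.
  have -> : (i \in B) = false by apply/negbTE; apply: contra iM; apply: (subsetP sB).
  have -> : (i \in C) = false by apply/negbTE; apply: contra iN; apply: (subsetP sC).
  by case: (i \in A); [right; rewrite rb100 | left; rewrite rb000].
exists (dv [set i] set0 set0).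
  by apply/D_char; exists [set i], set0, set0; rewrite sub1set iL !sub0set.
split; first by rewrite dvE !inE eqxx rb100.
by move=> k ki; rewrite dvE !inE (negbTE ki) rb000.
Qed.

Lemma privM i : i \in M -> i \notin N -> i \notin L -> priv i om.
Proof.
move=> iM iN iL; split.
  move=> x /D_char [A [B [C [sA sB sC ->]]]]; rewrite dvE.
  have -> : (i \in A) = false by apply/negbTE; apply: contra iL; apply: (subsetP sA).
  have -> : (i \in C) = false by apply/negbTE; apply: contra iN; apply: (subsetP sC).
  by case: (i \in B); [right; rewrite rb010 | left; rewrite rb000].
exists (dv set0 [set i] set0).
  by apply/D_char; exists set0, [set i], set0; rewrite sub1set iM !sub0set.
split; first by rewrite dvE !inE eqxx rb010.
by move=> k ki; rewrite dvE !inE (negbTE ki) rb000.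
Qed.

Lemma privN i : i \in N -> i \notin L -> i \notin M -> priv i (om ^+ 2).
Proof.
move=> iN iL iM; split.
  move=> x /D_char [A [B [C [sA sB sC ->]]]]; rewrite dvE.
  have -> : (i \in A) = false by apply/negbTE; apply: contra iL; apply: (subsetP sA).
  have -> : (i \in B) = false by apply/negbTE; apply: contra iM; apply: (subsetP sB).
  by case: (i \in C); [right; rewrite rb001 | left; rewrite rb000].
exists (dv set0 set0 [set i]).
  by apply/D_char; exists set0, set0, [set i]; rewrite sub1set iN !sub0set.
split; first by rewrite dvE !inE eqxx rb001.
by move=> k ki; rewrite dvE !inE (negbTE ki) rb000.
Qed.

Lemma dot_ones_ind A : dot (ind [set: 'I_m]) (ind A) = (#|A|%:R : F).
Proof.
rewrite dot_indr (eq_bigr (fun _ => 1)) => [|k _]; last by rewrite mxE inE.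
by rewrite sumr_const.
Qed.

Lemma W8mem (A B C : {set 'I_m}) : A \subset L -> B \subset M -> C \subset N ->
  (#|A|%:R + om * #|B|%:R + om ^+ 2 * #|C|%:R : F) \in W (ind [set: 'I_m]).
Proof.
move=> sA sB sC; apply/imsetP; exists (dv A B C).
  by apply/D_char; exists A, B, C.
by rewrite dot_dv !dot_ones_ind.
Qed.

Lemma W8 : L != set0 -> M != set0 -> N != set0 -> #|W (ind [set: 'I_m])| = 8%N.
Proof.
case/set0Pn => l Ll; case/set0Pn => k Mk; case/set0Pn => n Nn.
have ge5 : (5 <= #|W (ind [set: 'I_m])|)%N.
  have -> : 5%N = size (map rb3 [:: (false, false, false); (true, false, false);
      (false, true, false); (false, false, true); (true, true, false)]) by [].
  apply: W_ge; first by rewrite (map_inj_uniq rb3_inj).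
  apply/allP; rewrite /= andbT; apply/and5P; split.
  - by have := W8mem set0 set0 set0 (sub0set L) (sub0set M) (sub0set N); rewrite !cards0.
  - by have := W8mem [set l] set0 set0 (eq_ind_r is_true Ll (sub1set _ _)) (sub0set M) (sub0set N); rewrite cards1 !cards0.
  - by have := W8mem set0 [set k] set0 (sub0set L) (eq_ind_r is_true Mk (sub1set _ _)) (sub0set N); rewrite cards1 !cards0.
  - by have := W8mem set0 set0 [set n] (sub0set L) (sub0set M) (eq_ind_r is_true Nn (sub1set _ _)); rewrite cards1 !cards0.
  - by have := W8mem [set l] [set k] set0 (eq_ind_r is_true Ll (sub1set _ _)) (eq_ind_r is_true Mk (sub1set _ _)) (sub0set N); rewrite !cards1 !cards0.
have [j hj Wj] := pow_W (ind [set: 'I_m]).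
move: ge5; rewrite Wj; case: j hj {Wj} => [|[|[|[|]]]] //.
Qed.


Local Notation U := (L :|: M :|: N).

Lemma dotBl (u w x : V) : dot (u - w) x = dot u x - dot w x.
Proof. by rewrite /dot -sumrB; apply: eq_bigr => k _; rewrite !mxE mulrBl. Qed.
Lemma dot0l (x : V) : dot 0 x = 0.
Proof. by rewrite /dot big1 // => k _; rewrite mxE mul0r. Qed.
Lemma cPB (P : {set V}) x y : cP P (x - y) = cP P x - cP P y.
Proof. by apply/rowP => i; rewrite !mxE dotBl. Qed.

Lemma cP_D0 v : (cP Ds v == 0) = [forall d in D, dot v d == 0].
Proof.
apply/eqP/forall_inP => [h d Dd | h].
  case: (d =P 0) => [-> | /eqP dn0]; first by rewrite dot0.
  have Hd : d \in Ds by rewrite in_setD1 dn0 Dd.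
  have := congr1 (fun c : 'rV_#|Ds| => c 0 (enum_rank_in Hd d)) h.
  by rewrite /cP !mxE enum_rankK_in // => ->.
apply/rowP => i; rewrite !mxE; apply/eqP; apply: h.
by have := enum_valP i; rewrite !inE => /andP [].
Qed.

Lemma Ddot0 v : [forall d in D, dot v d == 0] = [forall k in U, v 0 k == 0].
Proof.
apply/forall_inP/forall_inP => [h k | h d /D_char [A [B [C [sA sB sC ->]]]]].
  rewrite !inE => /orP [/orP [kL | kM] | kN].
  - have := h (dv [set k] set0 set0); rewrite dot_dv !dot_indr big_set1 !big_set0 !mulr0 !addr0.
    by apply; apply/D_char; exists [set k], set0, set0; rewrite sub1set kL !sub0set.
  - have := h (dv set0 [set k] set0); rewrite dot_dv !dot_indr big_set1 !big_set0 !mulr0 addr0 add0r.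
    rewrite mulf_eq0 (negbTE omn0) /=.
    by apply; apply/D_char; exists set0, [set k], set0; rewrite sub1set kM !sub0set.
  - have := h (dv set0 set0 [set k]); rewrite dot_dv !dot_indr big_set1 !big_set0 !mulr0 !add0r.
    rewrite mulf_eq0 expf_eq0 (negbTE omn0) /=.
    by apply; apply/D_char; exists set0, set0, [set k]; rewrite sub1set kN !sub0set.
apply/eqP; rewrite /dot big1 // => k _; rewrite dvE.
case kU: (k \in U); first by rewrite (eqP (h k kU)) mul0r.
move: kU; rewrite !inE => /negbT; rewrite !negb_or => /andP [/andP [kL kM] kN].
have -> : (k \in A) = false by apply/negbTE; apply: contra kL; apply: (subsetP sA).
have -> : (k \in B) = false by apply/negbTE; apply: contra kM; apply: (subsetP sB).
have -> : (k \in C) = false by apply/negbTE; apply: contra kN; apply: (subsetP sC).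
by rewrite rb000 mulr0.
Qed.

Definition toF (v : V) : {ffun 'I_m -> F} := [ffun k => v 0 k].
Lemma toF_inj : injective toF.
Proof. by move=> x y h; apply/rowP => k; have := congr1 (fun f : {ffun 'I_m -> F} => f k) h; rewrite !ffunE. Qed.

Lemma ker_card : #|[set v : V | cP Ds v == 0]| = (2 ^ (3 * (m - #|U|)))%N.
Proof.
have -> : [set v : V | cP Ds v == 0] = [set v : V | [forall k in U, v 0 k == 0]].
  by apply/setP => v; rewrite !inE cP_D0 Ddot0.
rewrite -(card_imset _ toF_inj).
have -> : (m - #|U| = #|~: U|)%N.
  by have := cardsC U; rewrite card_ord; lia.
rewrite expnM (_ : (2 ^ 3 = #|[set: F]|)%N); last by rewrite cardsT HF.
rewrite -(card_pffun_on (0 : F)); apply: eq_card => f; apply/imsetP/pffun_onP.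
  move=> [v]; rewrite inE => /forall_inP hv ->; split.
    apply/subsetP => k; rewrite [k \in ~: U]inE inE ffunE; apply: contra => kU.
    by rewrite (eqP (hv k kU)).
  by move=> y _; rewrite inE.
move=> [/subsetP supp _]; exists (\row_k f k).
  rewrite inE; apply/forall_inP => k kU; rewrite mxE.
  apply: contraT => fk; have := supp k; rewrite [k \in ~: U]inE kU inE fk. by move=> /(_ isT).
by apply/ffunP => k; rewrite !ffunE mxE.
Qed.


Lemma CP_span (P : {set V}) c : (c \in CP P) = (c \in CPvs P).
Proof.
pose A : 'M[F]_(m, #|P|) := \matrix_(j, i) (@enum_val _ (mem P) i : V) 0 j.
have cPA v : cP P v = v *m A.
  by apply/rowP => i; rewrite !mxE /dot; apply: eq_bigr => j _; rewrite mxE.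
pose f : 'Hom(V, 'rV[F]_#|P|) := linfun (mulmxr A).
apply/imsetP/idP => [[v _ ->] | cin].
  by apply: memv_span; apply/mapP; exists v; rewrite ?mem_enum.
have : (CPvs P <= limg f)%VS.
  apply/span_subvP => y /mapP [v _ ->].
  by rewrite cPA -[v *m A]/(mulmxr A v) -(lfunE (mulmxr A)) memv_img ?memvf.
move/subvP/(_ c cin)/memv_imgP => [u _ ->].
by exists u; rewrite // lfunE /= cPA.
Qed.


Lemma Dsub_T : forall x y : V, x \in [set: V] -> y \in [set: V] -> x - y \in [set: V].
Proof. by move=> *; rewrite inE. Qed.

Lemma cPDsB : forall x y : V, cP Ds (x - y) = cP Ds x - cP Ds y.
Proof. exact: cPB. Qed.

Lemma dim_CP : \dim (CPvs Ds) = #|U|.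
Proof.
have h1 : #|CPvs Ds| = (#|F| ^ \dim (CPvs Ds))%N by apply: card_vspace.
have h2 : #|CPvs Ds| = #|cP Ds @: [set: V]|.
  apply: eq_card => c; rewrite -CP_span; apply/imsetP/imsetP => [[v _ ->]|[v _ ->]]; by exists v.
have h3 := @fiber_card _ _ [set: V] (cP Ds) Dsub_T cPDsB.
have h4 : #|[set x in [set: V] | cP Ds x == 0]| = (2 ^ (3 * (m - #|U|)))%N.
  by rewrite -ker_card; apply: eq_card => x; rewrite !inE.
move: h3; rewrite h4 -h2 h1 cardsT card_mx mul1n HF expnM (_ : (2 ^ 3 = 8)%N) //.
rewrite -expnD => /eqP; rewrite eqn_exp2l // => /eqP.
have : (#|U| <= m)%N by have := max_card (mem U); rewrite card_ord.
lia.
Qed.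

Lemma Zrel i : #|[set v : V | wt (cP Ds v) == i]| =
  (#|[set v : V | cP Ds v == 0%R]| * #|[set c in CP Ds | wt c == i]|)%N.
Proof.
rewrite -sum1_card (partition_big_imset (cP Ds)) /=.
rewrite (eq_bigr (fun _ => #|[set v : V | cP Ds v == 0]|)).
  rewrite sum_nat_const mulnC; congr (_ * _)%N; apply: eq_card => c.
  apply/imsetP/idP => [[v] | ].
    by rewrite inE => wv ->; rewrite inE wv andbT; apply/imsetP; exists v.
  rewrite inE => /andP [/imsetP [v _ ->] wv]; exists v => //; by rewrite inE.
move=> y /imsetP [x0]; rewrite inE => /eqP wx0 ->.
rewrite sum1dep_card.
transitivity #|[set x in [set: V] | cP Ds x == cP Ds x0]|.
  apply: eq_card => x; rewrite !inE; case: (cP Ds x =P cP Ds x0) => [e | _]; by rewrite ?e ?wx0 ?eqxx ?andbF.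
rewrite (@fiber_size _ _ [set: V] (cP Ds) x0 Dsub_T cPDsB) ?inE //.
by apply: eq_card => x; rewrite !inE.
Qed.


Lemma e1_lem (n : nat) : (3 <= n)%N -> (2 ^ n.-1 = 4 * 2 ^ (n - 3))%N.
Proof. move=> h; have -> : n.-1 = (n - 3).+2 by lia. by rewrite !expnS mulnA. Qed.
Lemma len_lem (a b n : nat) : a = (true + b)%N -> a = (2 ^ n)%N -> b = (2 ^ n - 1)%N.
Proof. move=> -> /=; lia. Qed.
Lemma idx_lem n b : (1 <= n)%N -> b = (2 ^ n - 1)%N -> (2 ^ n.-1 <= b)%N.
Proof.
move=> h ->; have e : (2 ^ n = 2 * 2 ^ n.-1)%N by rewrite -expnS prednK.
rewrite e; have : (0 < 2 ^ n.-1)%N by rewrite expn_gt0.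
lia.
Qed.

Lemma cP0 : cP Ds 0 = 0.
Proof. by apply/rowP => i; rewrite !mxE dot0l. Qed.

Lemma main_sec (HL : L != set0) (HM : M != set0) (HN : N != set0)
  (H2 : (2 <= (L :\: (M :|: N) != set0) + (M :\: (N :|: L) != set0)
              + (N :\: (L :|: M) != set0))%N) :
  (forall c, (c \in CP Ds) = (c \in CPvs Ds)) /\
  l_weight (CP Ds) 3 /\
  #|Ds| = (2 ^ s - 1)%N /\
  \dim (CPvs Ds) = #|L :|: M :|: N| /\
  min_dist (CP Ds) = (2 ^ s.-1)%N /\
  (forall w, (exists2 c, c \in CP Ds & wt c = w) <->
     [\/ w = 0%N, w = (2 ^ s.-1)%N, w = (6 * 2 ^ (s - 3))%N
       | w = (7 * 2 ^ (s - 3))%N]) /\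
  Zcount Ds 0 = (2 ^ (3 * (m - #|L :|: M :|: N|)))%N /\
  (forall i, (i <= #|Ds|)%N -> Zcount Ds i = (Zcount Ds 0 * Acount (CP Ds) i)%N).
Proof.
have s3 : (3 <= s)%N.
  move: HL HM HN; rewrite -!card_gt0; lia.
have wt_vals v : [\/ wt (cP Ds v) = 0%N, wt (cP Ds v) = (2 ^ s.-1)%N,
    wt (cP Ds v) = (6 * 2 ^ (s - 3))%N | wt (cP Ds v) = (7 * 2 ^ (s - 3))%N].
  have [j hj Wj] := pow_W v; rewrite (wt_pow _ _ hj s3 Wj).
  by case: (wval _ _ hj s3) => [[_ ->]|[_ ->]|[_ ->]|[_ ->]]; [constructor 1|constructor 2|constructor 3|constructor 4].
have wt_card v j : (j <= 3)%N -> #|W v| = (2 ^ j)%N ->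
    wt (cP Ds v) = (2 ^ s - 2 ^ (s - j))%N by move=> hj Wj; rewrite (wt_pow _ _ hj s3 Wj).
have PL : (L :\: (M :|: N) != set0) -> exists i, [/\ i \in L, i \notin M & i \notin N].
  by case/set0Pn => i; rewrite !inE negb_or => /andP [/andP [a b] c]; exists i.
have PM : (M :\: (N :|: L) != set0) -> exists i, [/\ i \in M, i \notin N & i \notin L].
  by case/set0Pn => i; rewrite !inE negb_or => /andP [/andP [a b] c]; exists i.
have PN : (N :\: (L :|: M) != set0) -> exists i, [/\ i \in N, i \notin L & i \notin M].
  by case/set0Pn => i; rewrite !inE negb_or => /andP [/andP [a b] c]; exists i.
have o0 : om != 0 := omn0.
have o20 : om ^+ 2 != 0 by rewrite expf_eq0 (negbTE omn0) andbF.
have n10 : (1 : F) != 0 := oner_neq0 _.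
have n1o : (1 : F) != om by rewrite eq_sym omn1.
have no2 : om != om ^+ 2 by rewrite -rb001 -rb010 neq_rb.
have n2o : om ^+ 2 != 1 by rewrite -rb100 -rb001 neq_rb.
have [v2 [v4 [W2v W4v]]] : exists v2 v4, #|W v2| = 2%N /\ #|W v4| = 4%N.
  move: H2 PL PM PN; case: (_ != set0); case: (_ != set0); case: (_ != set0) => //= _ PL PM PN.
  - have [i [a b c]] := PL isT; have [j [d e f]] := PM isT.
    exists (ind [set i]), (ind [set i] + ind [set j]); split; first exact: (W2 _ _ (privL _ a b c) n10).
    exact: (W4 _ _ _ _ (privL _ a b c) (privM _ d e f) n10 o0 n1o).
  - have [i [a b c]] := PL isT; have [j [d e f]] := PM isT.
    exists (ind [set i]), (ind [set i] + ind [set j]); split; first exact: (W2 _ _ (privL _ a b c) n10).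
    exact: (W4 _ _ _ _ (privL _ a b c) (privM _ d e f) n10 o0 n1o).
  - have [i [a b c]] := PL isT; have [j [d e f]] := PN isT.
    exists (ind [set i]), (ind [set i] + ind [set j]); split; first exact: (W2 _ _ (privL _ a b c) n10).
    by apply: (W4 _ _ _ _ (privL _ a b c) (privN _ d e f) n10 o20); rewrite eq_sym.
  - have [i [a b c]] := PM isT; have [j [d e f]] := PN isT.
    exists (ind [set i]), (ind [set i] + ind [set j]); split; first exact: (W2 _ _ (privM _ a b c) o0).
    exact: (W4 _ _ _ _ (privM _ a b c) (privN _ d e f) o0 o20 no2).
have attained w : [\/ w = (2 ^ s.-1)%N, w = (6 * 2 ^ (s - 3))%N | w = (7 * 2 ^ (s - 3))%N] ->
    exists v, wt (cP Ds v) = w.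
  case => ->.
  - exists v2; rewrite (wt_card v2 1%N) //; by case: (wval _ _ (isT : (1 <= 3)%N) s3) => [[]|[_ ->]|[]|[]].
  - exists v4; rewrite (wt_card v4 2%N) //; by case: (wval _ _ (isT : (2 <= 3)%N) s3) => [[]|[]|[_ ->]|[]].
  - exists (ind [set: 'I_m]); rewrite (wt_card _ 3%N) ?W8 //.
    by case: (wval _ _ (isT : (3 <= 3)%N) s3) => [[]|[]|[]|[_ ->]].
have pos : (0 < 2 ^ (s - 3))%N by rewrite expn_gt0.
have e1 : (2 ^ s.-1 = 4 * 2 ^ (s - 3))%N.
  exact: e1_lem.
have CPv c : c \in CP Ds -> exists v, c = cP Ds v by move=> /imsetP [v _ ->]; exists v.
have inCP v : cP Ds v \in CP Ds by apply/imsetP; exists v.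
have nzc c : c \in CP Ds -> c != 0 -> [\/ wt c = (2 ^ s.-1)%N, wt c = (6 * 2 ^ (s - 3))%N | wt c = (7 * 2 ^ (s - 3))%N].
  move=> /CPv [v ->] nz; case: (wt_vals v) => h; [|constructor 1|constructor 2|constructor 3] => //.
  by move: nz; rewrite -wt_eq0 h.
split; first by move=> c; exact: CP_span.
split.
  rewrite /l_weight /weights.
  have uq : uniq [:: (2 ^ s.-1)%N; (6 * 2 ^ (s - 3))%N; (7 * 2 ^ (s - 3))%N].
    rewrite /= !inE e1 !eqn_pmul2r //.
  rewrite (perm_size (uniq_perm (undup_uniq _) uq _)) // => w.
  rewrite mem_undup; apply/mapP/idP.
    move=> [c]; rewrite mem_filter mem_enum => /andP [nz hc] ->.
    by case: (nzc c hc nz) => ->; rewrite !inE eqxx ?orbT.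
  rewrite !inE => hw.
  have [v hv] : exists v, wt (cP Ds v) = w.
    by apply: attained; case/orP: hw => [/eqP ->|/orP [] /eqP ->]; [constructor 1|constructor 2|constructor 3].
  exists (cP Ds v) => //; rewrite mem_filter mem_enum inCP andbT -wt_eq0 hv.
  by case/orP: hw => [/eqP ->|/orP [] /eqP ->]; rewrite ?e1 muln_eq0 negb_or andbC -lt0n pos.
split.
  have := cardsD1 0 D; rewrite D0 => hD; exact: (len_lem _ _ _ hD D_card).
split; first exact: dim_CP.
split.
  have [v1 hv1] : exists v, wt (cP Ds v) = (2 ^ s.-1)%N by apply: attained; constructor 1.
  have c0n : cP Ds v1 != 0 by rewrite -wt_eq0 hv1 e1 muln_eq0 negb_or andbC -lt0n pos.
  rewrite /min_dist; apply/eqP; rewrite eqn_leq; apply/andP; split.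
    by rewrite -hv1; apply: bigmin_le; rewrite inCP c0n.
  apply: (big_ind (fun x => 2 ^ s.-1 <= x)%N).
  - apply: idx_lem; first exact: leq_trans s3.
    have := cardsD1 0 D; rewrite D0 => hD; exact: (len_lem _ _ _ hD D_card).
  - by move=> x y hx hy; rewrite leq_min hx hy.
  - move=> c /andP [hc nz]; case: (nzc c hc nz) => ->; rewrite ?leqnn // e1 leq_pmul2r //.
split.
  move=> w; split.
    move=> [c /CPv [v ->] <-]; exact: wt_vals.
  case=> [->|h|h|h].
  - by exists (cP Ds 0); rewrite ?inCP // cP0; apply/eqP; rewrite wt_eq0.
  - have [v hv] : exists v, wt (cP Ds v) = w by apply: attained; constructor 1.
    by exists (cP Ds v).
  - have [v hv] : exists v, wt (cP Ds v) = w by apply: attained; constructor 2.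
    by exists (cP Ds v).
  - have [v hv] : exists v, wt (cP Ds v) = w by apply: attained; constructor 3.
    by exists (cP Ds v).
have Z0 : Zcount Ds 0 = #|[set v : V | cP Ds v == 0%R]|.
  by rewrite /Zcount; apply: eq_card => v; rewrite !inE wt_eq0.
split; first by rewrite Z0 ker_card.
by move=> i _; rewrite Z0 /Zcount /Acount Zrel.
Qed.

End Main.

Theorem mainTheorem3 (F : finFieldType) (HF : #|F| = 8%N) (om : F)
  (Hom : om ^+ 3 + om + 1 = 0) (m : nat) (L M N : {set 'I_m})
  (HL : L != set0) (HM : M != set0) (HN : N != set0)
  (H2 : (2 <= (L :\: (M :|: N) != set0) + (M :\: (N :|: L) != set0)
              + (N :\: (L :|: M) != set0))%N) :
  let D := Dset om (Delta F L) (Delta F M) (Delta F N) in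
  let Ds := D :\ 0 in
  let s := (#|L| + #|M| + #|N|)%N in
  let C := CP Ds in
  (* linear code over F_8 *)
  (forall c, (c \in C) = (c \in CPvs Ds)) /\
  (* 3-weight *)
  l_weight C 3 /\
  (* length *)
  #|Ds| = (2 ^ s - 1)%N /\
  (* dimension *)
  \dim (CPvs Ds) = #|L :|: M :|: N| /\
  (* minimum distance *)
  min_dist C = (2 ^ s.-1)%N /\
  (* weights of the codewords *)
  (forall w, (exists2 c, c \in C & wt c = w) <->
     [\/ w = 0%N, w = (2 ^ s.-1)%N, w = (6 * 2 ^ (s - 3))%N
       | w = (7 * 2 ^ (s - 3))%N]) /\
  (* weight distribution relation *)
  Zcount Ds 0 = (2 ^ (3 * (m - #|L :|: M :|: N|)))%N /\
  (forall i, (i <= #|Ds|)%N -> Zcount Ds i = (Zcount Ds 0 * Acount C i)%N).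
Proof. by move=> D Ds s C; apply: (@main_sec F HF om Hom m L M N HL HM HN H2). Qed.
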